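(* Let $r=r(n)\ge 4$ be an integer-valued function with $r=o(n^{1/8})$ and let $n$ be sufficiently large. Let $A$ be an independent set in $G(n,r,1)$, and let $A_0$, $I_0$, $A_1$, $P$ and the notion ''connected'' be as defined in the context. Then no element $x\in[n]\setminus(I_0\cup P)$ is connected to two different vertices of $A_0$.
   Context: $G(n,r,1)$ is the graph on $[n]^{(r)}$ in which two $r$-subsets are adjacent iff they intersect in exactly one element; thus any two distinct members of an independent set $A$ are disjoint or share at least two elements. Let $A_0=\{v_1,\dots,v_k\}\subset A$ be a subfamily of pairwise disjoint sets of maximum possible cardinality, and $I_0=v_1\cup\dots\cup v_k$. Let $A_1$ be the set of $v\in A\setminus A_0$ that intersect exactly one of $v_1,\dots,v_k$. Let $\omega=\omega(r,n)=1$ if $r=4$ and $\omega=r^5\binom{n}{r-5}$ if $r\ge5$. An element $x\in[n]\setminus I_0$ is connected to $v_i$ if at least $\omega$ members of $A_1$ contain $x$ and intersect $v_i$. Two distinct elements $x,y$ are joint if every $v\in A_1$ satisfies $|v\cap\{x,y\}|\ne 1$. $P$ is the set of elements of $[n]\setminus I_0$ that are joint with some other element of $[n]\setminus I_0$. *)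

(* Defs.v *)
From mathcomp Require Import all_boot.
Set Implicit Arguments. Unset Strict Implicit. Unset Printing Implicit Defensive.

Section GnR1.
Variables (n r : nat).
Notation V := {set 'I_n}.

(* A is an independent set of G(n,r,1): a family of r-subsets of [n] in
   which no two distinct members intersect in exactly one element. *)
Definition indep_Gnr1 (A : {set V}) : Prop :=
  (forall v, v \in A -> #|v| = r) /\
  (forall u v, u \in A -> v \in A -> u != v -> #|u :&: v| != 1).

Definition pairwise_disjoint (F : {set V}) : Prop :=
  forall u v, u \in F -> v \in F -> u != v -> [disjoint u & v].

Definition max_disjoint_subfamily (A A0 : {set V}) : Prop :=
  [/\ A0 \subset A, pairwise_disjoint A0 &
      forall B : {set V}, B \subset A -> pairwise_disjoint B -> #|B| <= #|A0|].

Definition I0 (A0 : {set V}) : V := cover A0.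

Definition A1 (A A0 : {set V}) : {set V} :=
  [set v in A :\: A0 | #|[set u in A0 | ~~ [disjoint u & v]]| == 1].

Definition omega : nat := if r == 4 then 1 else r ^ 5 * 'C(n, r - 5).

Definition connected_to (A A0 : {set V}) (x : 'I_n) (vi : V) : Prop :=
  omega <= #|[set v in A1 A A0 | (x \in v) && ~~ [disjoint v & vi]]|.

Definition joint (A A0 : {set V}) (x y : 'I_n) : Prop :=
  x != y /\ forall v, v \in A1 A A0 -> #|v :&: [set x; y]| != 1.

Definition Pset (A A0 : {set V}) (x : 'I_n) : Prop :=
  x \notin I0 A0 /\ exists y, y \notin I0 A0 /\ joint A A0 x y.

End GnR1.

(* Main.v *)
Require Import Defs.
From mathcomp Require Import all_boot.
From mathcomp Require Import zify.
From Stdlib Require Import Lia.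
Set Implicit Arguments. Unset Strict Implicit. Unset Printing Implicit Defensive.

Lemma card_bigcup_le (T I : finType) (P : pred I) (F : I -> {set T}) :
  #|\bigcup_(i | P i) F i| <= \sum_(i | P i) #|F i|.
Proof.
elim/big_rec2: _ => [|i S k _ IH]; first by rewrite cards0.
apply: leq_trans (leq_card_setU _ _) _.
by rewrite leq_add2l.
Qed.

Lemma inter_gt1 n r (A : {set {set 'I_n}}) w1 w2 :
  indep_Gnr1 r A -> w1 \in A -> w2 \in A -> w1 != w2 ->
  ~~ [disjoint w1 & w2] -> 1 < #|w1 :&: w2|.
Proof.
move=> [_ hi] h1 h2 hne hd.
have h0 : #|w1 :&: w2| != 0.
  by rewrite cards_eq0 setI_eq0.
have := hi _ _ h1 h2 hne.
by case: #|_| h0 => [|[|k]].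
Qed.

Lemma A1P n (A A0 : {set {set 'I_n}}) w :
  w \in A1 A A0 -> [/\ w \in A, w \notin A0 &
     forall u v, u \in A0 -> v \in A0 -> ~~ [disjoint u & w] -> ~~ [disjoint v & w] -> u = v].
Proof.
rewrite /A1 !inE => /andP [/andP [hn hA] /cards1P [s hs]].
split => // u v hu hv du dv.
have : u \in [set u in A0 | ~~ [disjoint u & w]] by rewrite inE hu du.
have : v \in [set u in A0 | ~~ [disjoint u & w]] by rewrite inE hv dv.
by rewrite hs !inE => /eqP -> /eqP ->.
Qed.

Lemma cards5 n (x y t a b : 'I_n) :
  x != y -> x != t -> x != a -> x != b -> y != t -> y != a -> y != b ->
  t != a -> t != b -> a != b ->
  #|x |: (y |: (t |: (a |: [set b])))| = 5.
Proof.
move=> h1 h2 h3 h4 h5 h6 h7 h8 h9 h10.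
by rewrite !cardsU1 cards1 !in_setU1 !in_set1 (negbTE h1) (negbTE h2) (negbTE h3)
  (negbTE h4) (negbTE h5) (negbTE h6) (negbTE h7) (negbTE h8) (negbTE h9) (negbTE h10).
Qed.

Lemma sep n r (A A0 : {set {set 'I_n}}) x y z u w :
 indep_Gnr1 r A -> A0 \subset A -> u \in A0 -> w \in A1 A A0 -> x \in w -> y \in w ->
 ~~[disjoint w & u] ->
 z \in A1 A A0 -> #|z :&: [set x; y]| = 1 -> x != y ->
 exists t a b, [/\ t \in z, t \notin [set x;y], a \in u, b \in u & a != b] /\
   (x |: (y |: (t |: (a |: [set b])))) \subset w.
Proof.
move=> hI sA0 hu hw xw yw dwu hz hzc hxy.
have [wA wA0 _] := A1P hw.
have [zA zA0 _] := A1P hz.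
have uA : u \in A by apply: (subsetP sA0).
have wu : w != u by apply: contraNneq wA0 => ->.
have := inter_gt1 hI wA uA wu dwu => /card_gt1P [a [b [ha hb hab]]].
move: ha hb; rewrite !inE => /andP [aw au] /andP [bw bu].
have wz : w != z.
  apply/eqP => ewz; move: hzc; rewrite -ewz.
  have -> : w :&: [set x; y] = [set x; y].
    by apply/setIidPr/subsetP => q; rewrite !inE => /orP [] /eqP ->.
  by rewrite cards2 hxy.
have dwz : ~~ [disjoint w & z].
  rewrite -setI_eq0; apply/set0Pn.
  have : 0 < #|z :&: [set x; y]| by rewrite hzc.
  move=> /card_gt0P [p]; rewrite !inE => /andP [pz pxy].
  exists p; rewrite !inE pz andbT.
  by case/orP: pxy => /eqP ->.
have hwz := inter_gt1 hI wA zA wz dwz.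
have : ~~ (w :&: z \subset [set x; y]).
  apply/negP => hsub.
  have : #|w :&: z| <= #|z :&: [set x; y]|.
    apply: subset_leq_card; apply/subsetP => q hq.
    rewrite inE (subsetP hsub _ hq) andbT.
    by move: hq; rewrite inE => /andP [].
  by rewrite hzc leqNgt hwz.
move=> /subsetPn [t]; rewrite inE => /andP [tw tz] txy.
exists t, a, b; split; first by [].
apply/subsetP => q; rewrite !inE => /or4P [] //; try by move=> /eqP ->.
by move/orP => [] /eqP ->.
Qed.

Lemma setDUK' (T : finType) (A B : {set T}) : B \subset A -> (A :\: B) :|: B = A.
Proof.
move=> /subsetP sB; apply/setP => z; rewrite !inE.
by case: (boolP (z \in B)) => [/sB -> | _]; rewrite ?orbT ?orbF.
Qed.

Lemma sup_count n r (S : {set 'I_n}) k : #|S| = k ->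
  #|[set w : {set 'I_n} | (#|w| == r) && (S \subset w)]| <= 'C(n, r - k).
Proof.
move=> hS.
set H := [set w : {set 'I_n} | _].
have inj : {in H &, injective (fun w => w :\: S)}.
  move=> w1 w2; rewrite !inE => /andP [_ s1] /andP [_ s2] e.
  by rewrite -(setDUK' s1) -(setDUK' s2) e.
rewrite -(card_in_imset inj) -[n in 'C(n, _)]card_ord -card_draws.
apply: subset_leq_card; apply/subsetP => B /imsetP [w]; rewrite inE => /andP [/eqP hw sw] ->.
by rewrite inE cardsD (setIidPr sw) hw hS.
Qed.

Lemma sum_le (I : finType) (P : pred I) (Q : {pred I}) (F : I -> nat) c :
  (forall i, P i -> i \in Q) -> (forall i, P i -> F i <= c) ->
  \sum_(i | P i) F i <= #|Q| * c.
Proof.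
move=> hPQ hF.
apply: (@leq_trans (\sum_(i | P i) c)); first exact: leq_sum.
rewrite sum_nat_const leq_mul2r.
by apply/orP; right; apply/subset_leq_card/subsetP => i; rewrite unfold_in => /hPQ.
Qed.

Definition Fset n (A A0 : {set {set 'I_n}}) x (u : {set 'I_n}) :=
  [set v in A1 A A0 | (x \in v) && ~~ [disjoint v & u]].

Lemma ay_bound n r (A A0 : {set {set 'I_n}}) x y z u :
 indep_Gnr1 r A -> A0 \subset A -> u \in A0 -> z \in A1 A A0 ->
 #|z :&: [set x;y]| = 1 -> x != y -> [disjoint z & u] -> x \notin u -> y \notin u ->
 #|[set w in Fset A A0 x u | y \in w]| <= r^3 * 'C(n, r-5).
Proof.
move=> hI sA0 hu hz hzc hxy dzu xu yu.
have [zA _ _] := A1P hz.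
have uA : u \in A by apply: (subsetP sA0).
have [cr _] := hI.
pose H t a b := [set w : {set 'I_n} | (#|w| == r) && ((x |: (y |: (t |: (a |: [set b])))) \subset w)].
apply: (@leq_trans #|\bigcup_(t | (t \in z) && (t \notin [set x; y]))
   \bigcup_(a | a \in u) \bigcup_(b | (b \in u) && (a != b)) H t a b|).
  apply/subset_leq_card/subsetP => w /setIdP [/setIdP [hw /andP [xw dwu]] yw].
  have [t [a [b [[tz txy au bu ab] sub]]]] := sep hI sA0 hu hw xw yw dwu hz hzc hxy.
  have [wA _ _] := A1P hw.
  apply/bigcupP; exists t; first by rewrite tz txy.
  apply/bigcupP; exists a; first by [].
  apply/bigcupP; exists b; first by rewrite bu ab.
  by rewrite inE sub (cr _ wA) eqxx.
apply: (leq_trans (card_bigcup_le _ _)).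
have -> : r ^ 3 * 'C(n, r - 5) = #|z| * (#|u| * (#|u| * 'C(n, r - 5))).
  by rewrite (cr _ zA) (cr _ uA) !expnS expn0 muln1 !mulnA.
apply: sum_le => [t /andP [] //|t /andP [tz txy]].
apply: (leq_trans (card_bigcup_le _ _)).
apply: sum_le => // a au.
apply: (leq_trans (card_bigcup_le _ _)).
apply: sum_le => [b /andP [] //|b /andP [bu ab]].
apply: sup_count; apply: cards5 => //.
- by move: txy; rewrite !inE negb_or => /andP [h1 h2]; rewrite eq_sym.
- by apply: contraNneq xu => ->.
- by apply: contraNneq xu => ->.
- by move: txy; rewrite !inE negb_or => /andP [h1 h2]; rewrite eq_sym.
- by apply: contraNneq yu => ->.
- by apply: contraNneq yu => ->.
- by apply: (contraTneq _ au) => <-; rewrite (disjointFr dzu tz).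
- by apply: (contraTneq _ bu) => <-; rewrite (disjointFr dzu tz).
Qed.

Lemma card_sum (T : finType) (F : {pred T}) (P : pred T) :
  \sum_(i in F) (P i : nat) = #|[set i in F | P i]|.
Proof.
rewrite -sum1_card big_mkcond [RHS]big_mkcond /=; apply: eq_bigr => i _.
by rewrite inE; case: (i \in F); case: (P i).
Qed.

Lemma meet_common n (B w : {set 'I_n}) y : y \in B -> y \in w -> ~~ [disjoint B & w].
Proof. by move=> yB yw; apply/negP => d; rewrite (disjointFr d yB) in yw. Qed.

Lemma notin_cover n (A0 : {set {set 'I_n}}) u y : u \in A0 -> y \notin I0 A0 -> y \notin u.
Proof.
move=> hu; apply: contra => yu; rewrite /I0 /cover; apply/bigcupP; by exists u.
Qed.

Lemma sepy n (A A0 : {set {set 'I_n}}) x u v y w1 w2 :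
  A0 \subset A -> x \notin I0 A0 -> ~ Pset A A0 x -> u \in A0 -> v \in A0 -> u != v ->
  w1 \in Fset A A0 x u -> w2 \in Fset A A0 x v -> y \in w1 -> y \in w2 -> y != x ->
  y \notin I0 A0 /\ exists2 z, z \in A1 A A0 &
    #|z :&: [set x; y]| = 1 /\ ([disjoint z & u] \/ [disjoint z & v]).
Proof.
move=> sA0 xI nP hu hv huv /setIdP [h1 /andP [x1 d1]] /setIdP [h2 /andP [x2 d2]] y1 y2 yx.
have [_ _ U1] := A1P h1.
have [_ _ U2] := A1P h2.
have yI : y \notin I0 A0.
  have d1' : ~~ [disjoint u & w1] by rewrite disjoint_sym.
  have d2' : ~~ [disjoint v & w2] by rewrite disjoint_sym.
  apply/negP; rewrite /I0 /cover => /bigcupP [B hB yB].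
  have e1 := U1 _ _ hB hu (meet_common yB y1) d1'.
  have e2 := U2 _ _ hB hv (meet_common yB y2) d2'.
  by move: huv; rewrite -e1 -e2 eqxx.
split=> //.
case: (boolP [exists z in A1 A A0, #|z :&: [set x; y]| == 1]).
  move=> /existsP [z /andP [hz /eqP hzc]]; exists z => //; split=> //.
  have [_ _ Uz] := A1P hz.
  case: (boolP [disjoint z & u]) => dzu; first by left.
  case: (boolP [disjoint z & v]) => dzv; first by right.
  by move: huv; rewrite (Uz _ _ hu hv) ?eqxx // disjoint_sym.
move=> hne; exfalso; apply: nP; split=> //; exists y; split=> //.
split; first by rewrite eq_sym.
move=> z hz; apply/negP => /eqP hzc; move/negP: hne; apply.
by apply/existsP; exists z; rewrite hz hzc.
Qed.

Lemma five_le n r (A A0 : {set {set 'I_n}}) x y z u w :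
 indep_Gnr1 r A -> A0 \subset A -> u \in A0 -> z \in A1 A A0 ->
 #|z :&: [set x;y]| = 1 -> x != y -> [disjoint z & u] -> x \notin u -> y \notin u ->
 w \in Fset A A0 x u -> y \in w -> 5 <= r.
Proof.
move=> hI sA0 hu hz hzc hxy dzu xu yu /setIdP [hw /andP [xw dwu]] yw.
have [t [a [b [[tz txy au bu ab] sub]]]] := sep hI sA0 hu hw xw yw dwu hz hzc hxy.
have [wA _ _] := A1P hw.
have [cr _] := hI.
rewrite -(cr _ wA); apply: leq_trans (subset_leq_card sub); rewrite cards5 //.
- by move: txy; rewrite !inE negb_or eq_sym => /andP [].
- by apply: contraNneq xu => ->.
- by apply: contraNneq xu => ->.
- by move: txy; rewrite !inE negb_or => /andP [h1 h2]; rewrite eq_sym.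
- by apply: contraNneq yu => ->.
- by apply: contraNneq yu => ->.
- by apply: (contraTneq _ au) => <-; rewrite (disjointFr dzu tz).
- by apply: (contraTneq _ bu) => <-; rewrite (disjointFr dzu tz).
Qed.

Lemma pair_bound n r (A A0 : {set {set 'I_n}}) x u v y :
 indep_Gnr1 r A -> A0 \subset A -> x \notin I0 A0 -> ~ Pset A A0 x ->
 u \in A0 -> v \in A0 -> u != v -> y != x ->
 #|[set w in Fset A A0 x u | y \in w]| * #|[set w in Fset A A0 x v | y \in w]| <=
 r^3 * 'C(n, r-5) * (#|[set w in Fset A A0 x u | y \in w]| + #|[set w in Fset A A0 x v | y \in w]|).
Proof.
move=> hI sA0 xI nP hu hv huv yx.
set a := #|[set w in Fset A A0 x u | y \in w]|.
set b := #|[set w in Fset A A0 x v | y \in w]|.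
case: (posnP a) => [->|]; first by rewrite mul0n.
move=> /card_gt0P [w1 /setIdP [h1 y1]].
case: (posnP b) => [->|]; first by rewrite muln0.
move=> /card_gt0P [w2 /setIdP [h2 y2]].
have [yI [z hz [hzc [dzu|dzv]]]] := sepy sA0 xI nP hu hv huv h1 h2 y1 y2 yx.
- have : a <= r ^ 3 * 'C(n, r - 5).
    apply: (ay_bound hI sA0 hu hz hzc) => //; first by rewrite eq_sym.
    + exact: notin_cover hu xI.
    + exact: notin_cover hu yI.
  move=> ha; rewrite mulnDr; apply: (leq_trans _ (leq_addl _ _)).
  by rewrite leq_mul2r ha orbT.
- have : b <= r ^ 3 * 'C(n, r - 5).
    have hzc' : #|z :&: [set x; y]| = 1 by [].
    apply: (ay_bound hI sA0 hv hz hzc') => //; first by rewrite eq_sym.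
    + exact: notin_cover hv xI.
    + exact: notin_cover hv yI.
  move=> hb; rewrite mulnDr; apply: (leq_trans _ (leq_addr _ _)).
  by rewrite mulnC leq_mul2r hb orbT.
Qed.

Lemma common_y n r (A A0 : {set {set 'I_n}}) x u v w1 w2 :
  indep_Gnr1 r A -> A0 \subset A -> u \in A0 -> v \in A0 -> u != v ->
  w1 \in Fset A A0 x u -> w2 \in Fset A A0 x v -> exists y, [/\ y != x, y \in w1 & y \in w2].
Proof.
move=> hI sA0 hu hv huv h1 h2.
move: (h1) (h2) => /setIdP [a1 /andP [x1 d1]] /setIdP [a2 /andP [x2 d2]].
have [A1w _ U1] := A1P a1.
have [A2w _ _] := A1P a2.
have hne : w1 != w2.
  apply/eqP => e; move: huv; rewrite (U1 u v) ?eqxx // disjoint_sym //.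
  by rewrite e.
have := inter_gt1 hI A1w A2w hne (meet_common x1 x2).
rewrite (cardsD1 x) !inE x1 x2 /= add1n ltnS => /card_gt0P [y].
by rewrite !inE => /and3P [yx y1 y2]; exists y.
Qed.

Lemma sum_in n (w : {set 'I_n}) : \sum_i (i \in w : nat) = #|w|.
Proof.
rewrite -sum1_card [RHS]big_mkcond /=; apply: eq_bigr => i _.
by case: (i \in w).
Qed.

Lemma sum_a n r (A A0 : {set {set 'I_n}}) x u :
  indep_Gnr1 r A ->
  \sum_y #|[set w in Fset A A0 x u | y \in w]| = #|Fset A A0 x u| * r.
Proof.
move=> [cr _].
rewrite (eq_bigr (fun y => \sum_(w in Fset A A0 x u) (y \in w : nat))); last first.
  by move=> y _; rewrite card_sum.
rewrite exchange_big /= -sum_nat_const; apply: eq_bigr => w hw.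
rewrite sum_in; apply: cr.
by move: hw => /setIdP [/A1P [] //].
Qed.

Lemma core n r (A A0 : {set {set 'I_n}}) x u v :
 indep_Gnr1 r A -> A0 \subset A -> x \notin I0 A0 -> ~ Pset A A0 x ->
 u \in A0 -> v \in A0 -> u != v -> r - 5 <= n -> 4 <= r ->
 omega n r <= #|Fset A A0 x u| -> omega n r <= #|Fset A A0 x v| -> False.
Proof.
move=> hI sA0 xI nP hu hv huv hrn hr4 cu cv.
have Cpos : 0 < 'C(n, r - 5) by rewrite bin_gt0.
have r0 : 0 < r by apply: leq_trans hr4.
have ompos : 0 < omega n r.
  rewrite /omega; case: eqP => // _; by rewrite muln_gt0 expn_gt0 Cpos r0.
have [w1 h1] : exists w, w \in Fset A A0 x u by apply/card_gt0P; exact: leq_trans cu.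
have [w2 h2] : exists w, w \in Fset A A0 x v by apply/card_gt0P; exact: leq_trans cv.
have hr5 : 5 <= r.
  have [y [yx y1 y2]] := common_y hI sA0 hu hv huv h1 h2.
  have [yI [z hz [hzc [dzu|dzv]]]] := sepy sA0 xI nP hu hv huv h1 h2 y1 y2 yx.
  + apply: (five_le hI sA0 hu hz hzc _ dzu _ _ h1 y1); first by rewrite eq_sym.
    * exact: notin_cover hu xI.
    * exact: notin_cover hu yI.
  + apply: (five_le hI sA0 hv hz hzc _ dzv _ _ h2 y2); first by rewrite eq_sym.
    * exact: notin_cover hv xI.
    * exact: notin_cover hv yI.
move: cu cv; rewrite /omega ifN; last by apply/eqP => e; move: hr5; rewrite e.
set K := r ^ 3 * 'C(n, r - 5).
set Fu := Fset A A0 x u; set Fv := Fset A A0 x v.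
pose a y := #|[set w in Fu | y \in w]|.
pose b y := #|[set w in Fv | y \in w]|.
have H1 : #|Fu| * #|Fv| <= \sum_(y | y != x) a y * b y.
  rewrite -cardsX.
  rewrite (eq_bigr (fun y => \sum_(p in setX Fu Fv) ((y \in p.1) && (y \in p.2) : nat))); last first.
    move=> y _; rewrite card_sum -cardsX; apply: eq_card => [[p1 p2]].
    apply/idP/idP.
      rewrite in_setX => /andP [/setIdP [q1 e1] /setIdP [q2 e2]].
      by apply/setIdP; split; [rewrite in_setX q1 q2 | rewrite /= e1 e2].
    move=> /setIdP [hh] /= /andP [e1 e2]; move: hh; rewrite in_setX => /andP [q1 q2].
    by rewrite in_setX; apply/andP; split; apply/setIdP.
  rewrite exchange_big /= -sum1_card; apply: leq_sum => p.
  rewrite inE => /andP [p1 p2].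
  have [y [yx y1 y2]] := common_y hI sA0 hu hv huv p1 p2.
  by rewrite (bigD1 y) //= y1 y2.
have H2 : \sum_(y | y != x) a y * b y <= K * (#|Fu| * r + #|Fv| * r).
  apply: (@leq_trans (\sum_(y | y != x) K * (a y + b y))).
    by apply: leq_sum => y yx; exact: pair_bound.
  rewrite -big_distrr leq_mul2l; apply/orP; right.
  rewrite big_split /= -(sum_a _ _ _ hI) -(sum_a _ _ _ hI).
  apply: leq_add.
  + by rewrite [X in _ <= X](bigD1 x) //= leq_addl.
  + by rewrite [X in _ <= X](bigD1 x) //= leq_addl.
have Kpos : 0 < K by rewrite muln_gt0 expn_gt0 Cpos r0.
have eom : r ^ 5 * 'C(n, r - 5) = r * r * K by rewrite /K !expnS expn0 !mulnA !muln1.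
rewrite eom => cu cv.
have H := leq_trans H1 H2.
move: H cu cv Kpos hr5; set p := #|Fu|; set q := #|Fv|.
clear. move=> H cu cv Kpos hr5.
nia.
Qed.

Theorem lemma2 (r : nat -> nat) :
  (forall n, 4 <= r n) ->
  (* r = o(n^{1/8}), i.e. r(n)^8 = o(n) *)
  (forall c : nat, exists N, forall n, N <= n -> c * r n ^ 8 <= n) ->
  exists N, forall n, N <= n ->
  forall (A A0 : {set {set 'I_n}}),
    indep_Gnr1 (r n) A ->
    max_disjoint_subfamily A A0 ->
    forall x : 'I_n, x \notin I0 A0 -> ~ Pset A A0 x ->
    forall u v, u \in A0 -> v \in A0 -> u != v ->
      @connected_to n (r n) A A0 x u -> @connected_to n (r n) A A0 x v -> False.
Proof.
move=> hr4 ho.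
have [N hN] := ho 1.
exists N => n hn A A0 hI [sA0 _ _] x xI nP u v hu hv huv cu cv.
have hrn : r n - 5 <= n.
  have h := hN n hn; rewrite mul1n in h.
  apply: leq_trans (leq_subr _ _) _; apply: leq_trans h.
  rewrite -{1}(expn1 (r n)); apply: leq_pexp2l => //.
  exact: leq_trans (hr4 n).
exact: (core hI sA0 xI nP hu hv huv hrn (hr4 n) cu cv).
Qed.
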